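(* Let $K$ be a commutative ring which is injective as a module over itself and is a cogenerator of the category $\mathrm{Mod}_K$ of $K$-modules. Let $\mathcal S$ be the category of $K$-submodules of finite powers $K^n$, with the discrete topology, and $\mathcal V$ the closure of $\mathcal S$ under products and subobjects (submodules with induced topology) in the category of Hausdorff topological $K$-modules, with $K$ discrete. Then $\mathrm{chu}(\mathrm{Mod}_K,K)$ is equivalent to each of the categories $\mathcal V_s$ and $\mathcal V_w$ of topological $K$-modules in $\mathcal V$ that are strongly, respectively weakly, topologized with respect to their continuous $K$-linear functionals into $K$.
   Context: $\mathcal V_w$ consists of $V\in\mathcal V$ whose topology is the coarsest making all continuous $K$-linear maps $V\to K$ continuous; $\mathcal V_s$ consists of $V\in\mathcal V$ whose topology is the finest (among objects of $\mathcal V$ on the same underlying module) having the same continuous $K$-linear maps to $K$. $\mathrm{chu}(\mathrm{Mod}_K,K)$: objects are pairs $(A,X)$ of $K$-modules with a $K$-bilinear pairing $A\times X\to K$ such that both induced maps $A\to\mathrm{Hom}_K(X,K)$, $X\to\mathrm{Hom}_K(A,K)$ are injective; morphisms $(A,X)\to(B,Y)$ are pairs of $K$-linear maps $f:A\to B$, $g:Y\to X$ with $\langle fa,y\rangle=\langle a,gy\rangle$. *)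

(* Defs.v *)
From HB Require Import structures.
From mathcomp Require Import all_boot all_order all_algebra.
From Stdlib Require Import List.

Set Implicit Arguments.
Unset Strict Implicit.
Unset Printing Implicit Defensive.
Import GRing.Theory.
Local Open Scope ring_scope.

Record category := Category {
  ob : Type;
  hom : ob -> ob -> Type;
  idc : forall a, hom a a;
  comp : forall a b c, hom b c -> hom a b -> hom a c
}.
Arguments hom : clear implicits.
Arguments ob : clear implicits.
Arguments idc {_} _.
Arguments comp {_ _ _ _} _ _.

Record functor (C D : category) := Functor {
  fob : ob C -> ob D;
  fmap : forall a b, hom C a b -> hom D (fob a) (fob b);
  fmap_id : forall a, fmap (idc a) = idc (fob a);
  fmap_comp : forall a b c (g : hom C b c) (f : hom C a b),
      fmap (comp g f) = comp (fmap g) (fmap f)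
}.
Arguments fob {C D} _ _.
Arguments fmap {C D} _ {a b} _.

Definition is_iso (C : category) (a b : ob C) (f : hom C a b) :=
  exists g : hom C b a, comp g f = idc a /\ comp f g = idc b.

Definition cat_equiv (C D : category) : Prop :=
  exists (F : functor C D) (G : functor D C)
         (eta : forall a, hom C a (fob G (fob F a)))
         (eps : forall b, hom D (fob F (fob G b)) b),
    (forall a a' (f : hom C a a'),
        comp (eta a') f = comp (fmap G (fmap F f)) (eta a)) /\
    (forall a, is_iso (eta a)) /\
    (forall b b' (g : hom D b b'),
        comp g (eps b) = comp (eps b') (fmap F (fmap G g))) /\
    (forall b, is_iso (eps b)).

Section Modules.
Variable K : comPzRingType.

Definition lin (M N : lmodType K) (f : M -> N) : Prop :=
  forall (a : K) (x y : M), f (a *: x + y) = a *: f x + f y.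

Lemma lin_comp (M N P : lmodType K) (g : N -> P) (f : M -> N) :
  lin g -> lin f -> lin (fun x => g (f x)).
Proof. by move=> hg hf a x y; rewrite hf hg. Qed.

Lemma lin_id (M : lmodType K) : lin (fun x : M => x).
Proof. by []. Qed.

Definition self_injective : Prop :=
  forall (M N : lmodType K) (i : M -> N) (f : M -> K^o),
    lin i -> injective i -> lin f ->
    exists g : N -> K^o, lin g /\ forall x, g (i x) = f x.

Definition cogenerator : Prop :=
  forall (M N : lmodType K) (f g : M -> N),
    lin f -> lin g -> f <> g ->
    exists h : N -> K^o, lin h /\ (fun x => h (f x)) <> (fun x => h (g x)).

Record chu_ob := ChuOb {
  cA : lmodType K;
  cX : lmodType K;
  cp : cA -> cX -> K;
  cp_linl : forall x : cX, lin (fun a : cA => (cp a x : K^o));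
  cp_linr : forall a : cA, lin (fun x : cX => (cp a x : K^o));
  cp_injA : forall a a' : cA, (forall x, cp a x = cp a' x) -> a = a';
  cp_injX : forall x x' : cX, (forall a, cp a x = cp a x') -> x = x'
}.

Definition chu_hom (A B : chu_ob) :=
  { fg : (cA A -> cA B) * (cX B -> cX A) |
    [/\ lin fg.1, lin fg.2 & forall a y, cp (fg.1 a) y = cp a (fg.2 y)] }.

Definition chu_id (A : chu_ob) : chu_hom A A.
Proof. exists (fun a => a, fun x => x); split => //. Defined.

Definition chu_comp (A B C : chu_ob) (h : chu_hom B C) (k : chu_hom A B) :
  chu_hom A C.
Proof.
case: h => [[f' g'] [hf' hg' hadj']]; case: k => [[f g] [hf hg hadj]].
exists (fun a => f' (f a), fun z => g (g' z)); split => /=.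
- exact: lin_comp.
- exact: lin_comp.
- by move=> a y; rewrite hadj' hadj.
Defined.

Definition chu_cat : category := Category chu_id chu_comp.

Record topmod := TopMod {
  tm_car :> lmodType K;
  tm_open : (tm_car -> Prop) -> Prop;
  tm_open_T : tm_open (fun _ => True);
  tm_open_I : forall U V, tm_open U -> tm_open V ->
                tm_open (fun x => U x /\ V x);
  tm_open_U : forall F : (tm_car -> Prop) -> Prop,
                (forall U, F U -> tm_open U) ->
                tm_open (fun x => exists U, F U /\ U x);
  tm_add_cont : forall (x y : tm_car) W, tm_open W -> W (x + y) ->
      exists U V, [/\ tm_open U, tm_open V, U x, V y &
                      forall u v, U u -> V v -> W (u + v)];
  tm_opp_cont : forall (x : tm_car) W, tm_open W -> W (- x) ->
      exists U, [/\ tm_open U, U x & forall u, U u -> W (- u)];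
  (* scalar multiplication K x M -> M is continuous, K being discrete *)
  tm_scale_cont : forall (a : K) (x : tm_car) W, tm_open W -> W (a *: x) ->
      exists U, [/\ tm_open U, U x & forall u, U u -> W (a *: u)];
  tm_hausdorff : forall x y : tm_car, x <> y ->
      exists U V, [/\ tm_open U, tm_open V, U x, V y &
                      forall z, U z -> V z -> False]
}.
Arguments tm_open : clear implicits.

Definition cont (M N : topmod) (f : M -> N) : Prop :=
  forall W, tm_open N W -> tm_open M (fun x => W (f x)).

Definition dcont (M : topmod) (f : M -> K) : Prop :=
  forall S : K -> Prop, tm_open M (fun x => S (f x)).

(* W is open for the initial topology on T induced by the family
   p i : T -> Y i (Y i carrying the topology openY i): it is a union of
   finite intersections of sets p i ^-1 (U) with U open. *)
Definition initial_open (T I : Type) (Y : I -> Type)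
  (openY : forall i, (Y i -> Prop) -> Prop) (p : forall i, T -> Y i)
  (W : T -> Prop) : Prop :=
  forall x, W x -> exists (s : list I) (U : forall i, Y i -> Prop),
    (forall i, In i s -> openY i (U i) /\ U i (p i x)) /\
    (forall y, (forall i, In i s -> U i (p i y)) -> W y).

(* The class V: closure of S (submodules of finite powers K^n with the
   discrete topology) under products and subobjects, up to isomorphism. *)
Inductive inV : topmod -> Prop :=
| inV_S (M : topmod) (n : nat) (j : M -> 'rV[K]_n) :
    lin j -> injective j -> (forall W, tm_open M W) -> inV M
| inV_prod (M : topmod) (I : Type) (N : I -> topmod) (p : forall i, M -> N i) :
    (forall i, inV (N i)) ->
    (forall i, lin (p i)) ->
    (forall x y : M, (forall i, p i x = p i y) -> x = y) ->
    (forall y : forall i, N i, exists x : M, forall i, p i x = y i) ->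
    (forall W, tm_open M W <-> initial_open (fun i => tm_open (N i)) p W) ->
    inV M
| inV_sub (M N : topmod) (j : M -> N) :
    inV N -> lin j -> injective j ->
    (forall W, tm_open M W <->
               exists U, tm_open N U /\ forall x, W x <-> U (j x)) ->
    inV M.

Definition cfun (M : topmod) :=
  { f : M -> K^o | lin f /\ dcont (M := M) f }.

(* weakly topologized: the topology of M is the coarsest making all
   continuous linear functionals M -> K (K discrete) continuous *)
Definition weak_top (M : topmod) : Prop :=
  forall W, tm_open M W <->
    initial_open (fun (_ : cfun M) (S : K -> Prop) => True)
                 (fun (f : cfun M) (x : M) => (proj1_sig f x : K)) W.

(* strongly topologized: the topology of M is the finest among the
   topologies on the same module (transported along a linear bijection h)
   belonging to V and having the same continuous linear functionals *)
Definition strong_top (M : topmod) : Prop :=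
  forall (N : topmod) (h : N -> M),
    lin h -> bijective h -> inV N ->
    (forall f : M -> K^o, lin f ->
       (dcont (M := M) f <-> dcont (M := N) (fun n => f (h n)))) ->
    forall W, tm_open N W -> tm_open M (fun m => exists n, W n /\ h n = m).

Definition top_hom (M N : topmod) := { f : M -> N | lin f /\ cont f }.

Definition top_id (M : topmod) : top_hom M M.
Proof. by exists (fun x => x); split => // W. Defined.

Definition top_comp (M N P : topmod) (g : top_hom N P) (f : top_hom M N) :
  top_hom M P.
Proof.
case: g => [g [lg cg]]; case: f => [f [lf cf]].
exists (fun x => g (f x)); split; first exact: lin_comp.
by move=> W /cg /cf.
Defined.

Definition Vs_ob := { M : topmod | inV M /\ strong_top M }.
Definition Vw_ob := { M : topmod | inV M /\ weak_top M }.

Definition Vs_cat : category :=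
  @Category Vs_ob (fun M N => top_hom (proj1_sig M) (proj1_sig N))
    (fun M => top_id _) (fun _ _ _ g f => top_comp g f).

Definition Vw_cat : category :=
  @Category Vw_ob (fun M N => top_hom (proj1_sig M) (proj1_sig N))
    (fun M => top_id _) (fun _ _ _ g f => top_comp g f).

End Modules.

(* Main.v *)
Require Import Defs.
From HB Require Import structures.
From mathcomp Require Import all_boot all_order all_algebra.
From mathcomp Require Import boolp functions.
From Stdlib Require Import List ProofIrrelevance FunctionalExtensionality PropExtensionality Classical.

Set Implicit Arguments.
Unset Strict Implicit.
Unset Printing Implicit Defensive.
Import GRing.Theory.
Local Open Scope ring_scope.


Lemma pred_ext (T : Type) (P Q : T -> Prop) : (forall x, P x <-> Q x) -> P = Q.
Proof.
move=> h; apply: functional_extensionality => x; apply: propositional_extensionality; exact: h.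
Qed.

Lemma sig_eq (T : Type) (P : T -> Prop) (a b : {x | P x}) : sval a = sval b -> a = b.
Proof.
case: a b => [x px] [y py] /= e; subst y; by rewrite (proof_irrelevance _ px py).
Qed.

Lemma In_mem (T : eqType) (x : T) (s : list T) : In x s -> x \in s.
Proof.
elim: s => //= y s IH [->|/IH h]; first by rewrite inE eqxx.
by rewrite inE h orbT.
Qed.

Lemma mem_In (T : eqType) (x : T) (s : list T) : x \in s -> In x s.
Proof.
elim: s => //= y s IH; rewrite inE => /orP[/eqP->|/IH h]; [left|right] => //.
Qed.

Lemma collect (T J : Type) (s : list J) (A : list T -> J -> Prop) :
  (forall fs gs j, (forall t, In t fs -> In t gs) -> A fs j -> A gs j) ->
  (forall j, In j s -> exists fs, A fs j) -> exists fs, forall j, In j s -> A fs j.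
Proof.
move=> mono; elim: s => [|j s IH] h; first by exists nil.
have [fs0 h0] := h j (or_introl erefl).
have [fs1 h1] := IH (fun k hk => h k (or_intror hk)).
exists (fs0 ++ fs1) => k [<-|hk].
- by apply: mono h0 => t ht; apply: in_or_app; left.
- by apply: mono (h1 k hk) => t ht; apply: in_or_app; right.
Qed.

Section Gen.
Variable K : comPzRingType.

Section LinLemmas.
Variables (M N : lmodType K) (f : M -> N).
Hypothesis hf : lin f.
Lemma lin0 : f 0 = 0.
Proof.
have e : f 0 = f 0 + f 0 by rewrite -{1}(addr0 0) -{1}(scale1r 0) hf scale1r.
by apply: (addrI (f 0)); rewrite addr0 -e.
Qed.
Lemma linD x y : f (x + y) = f x + f y.
Proof. by rewrite -{1}(scale1r x) hf scale1r. Qed.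
Lemma linZ a x : f (a *: x) = a *: f x.
Proof. by rewrite -(addr0 (a *: x)) hf lin0 addr0. Qed.
Lemma linN x : f (- x) = - f x.
Proof. by rewrite -scaleN1r linZ scaleN1r. Qed.
Lemma linB x y : f (x - y) = f x - f y.
Proof. by rewrite linD linN. Qed.
End LinLemmas.

Lemma lin_intro (M N : lmodType K) (f : M -> N) :
  (forall x y, f (x + y) = f x + f y) -> (forall a x, f (a *: x) = a *: f x) -> lin f.
Proof. by move=> hD hZ a x y; rewrite hD hZ. Qed.

Implicit Types M : topmod K.

Lemma open_ext M (U V : M -> Prop) : (forall x, U x <-> V x) -> tm_open U -> tm_open V.
Proof. by move=> /pred_ext ->. Qed.

Lemma open_local M (W : M -> Prop) :
  (forall x, W x -> exists U, tm_open U /\ U x /\ forall y, U y -> W y) -> tm_open W.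
Proof.
move=> h.
apply: (@open_ext _ (fun x => exists U, (tm_open U /\ forall y, U y -> W y) /\ U x)).
- move=> x; split; first by case=> U [[_ hU] Ux]; exact: hU.
  by move=> /h [U [oU [Ux hU]]]; exists U.
- by apply: tm_open_U => U [].
Qed.

Lemma open_list M (T : Type) (s : list T) (P : T -> M -> Prop) :
  (forall t, In t s -> tm_open (P t)) -> tm_open (fun y => forall t, In t s -> P t y).
Proof.
elim: s => [|t s IH] h /=.
- by apply: open_ext (tm_open_T M) => x; split => // _ t [].
- apply: open_ext (tm_open_I (h t (or_introl erefl)) (IH (fun u hu => h u (or_intror hu)))).
  move=> y; split; first by move=> [h1 h2] u [<-|hu]; [exact h1|exact: h2].
  move=> H; split; [exact: H (or_introl erefl)| move=> u hu; exact: H u (or_intror hu)].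
Qed.

Lemma dcont_eq M (f : M -> K) c : dcont f -> tm_open (fun y => f y = c).
Proof. by move=> h; exact: (h (fun k => k = c)). Qed.

Lemma dcont_local M (f : M -> K) :
  (forall x, exists U, tm_open U /\ U x /\ forall y, U y -> f y = f x) -> dcont f.
Proof.
move=> h S; apply: open_local => x Sx; have [U [oU [Ux hU]]] := h x.
by exists U; split => //; split => // y /hU ->.
Qed.

Section WTop.
Variables (M : lmodType K) (I : Type) (f : I -> M -> K^o).
Hypothesis flin : forall i, lin (f i).
Hypothesis fsep : forall a b, (forall i, f i a = f i b) -> a = b.

Definition agree (s : list I) (a b : M) := forall i, In i s -> f i b = f i a.
Definition wopen (W : M -> Prop) :=
  forall a, W a -> exists s, forall b, agree s a b -> W b.

Lemma agree_open s a : wopen (agree s a).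
Proof. by move=> b hb; exists s => c hc i hi; rewrite hc // hb. Qed.

Lemma wopen_T : wopen (fun _ => True).
Proof. by move=> a _; exists nil. Qed.

Lemma wopen_I U V : wopen U -> wopen V -> wopen (fun x => U x /\ V x).
Proof.
move=> hU hV a [Ua Va]; have [s1 h1] := hU a Ua; have [s2 h2] := hV a Va.
exists (s1 ++ s2) => b hb; split.
- by apply: h1 => i hi; apply: hb; apply: in_or_app; left.
- by apply: h2 => i hi; apply: hb; apply: in_or_app; right.
Qed.

Lemma wopen_U (F : (M -> Prop) -> Prop) : (forall U, F U -> wopen U) ->
  wopen (fun x => exists U, F U /\ U x).
Proof.
move=> h a [U [FU Ua]]; have [s hs] := h U FU a Ua.
by exists s => b /hs Ub; exists U.
Qed.

Lemma wopen_add (x y : M) W : wopen W -> W (x + y) ->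
  exists U V, [/\ wopen U, wopen V, U x, V y & forall u v, U u -> V v -> W (u + v)].
Proof.
move=> hW /hW [s hs]; exists (agree s x), (agree s y); split => //; try exact: agree_open.
move=> u v hu hv; apply: hs => i hi; by rewrite !linD // hu // hv.
Qed.

Lemma wopen_opp (x : M) W : wopen W -> W (- x) ->
  exists U, [/\ wopen U, U x & forall u, U u -> W (- u)].
Proof.
move=> hW /hW [s hs]; exists (agree s x); split => //; first exact: agree_open.
move=> u hu; apply: hs => i hi; by rewrite !linN // hu.
Qed.

Lemma wopen_scale (c : K) (x : M) W : wopen W -> W (c *: x) ->
  exists U, [/\ wopen U, U x & forall u, U u -> W (c *: u)].
Proof.
move=> hW /hW [s hs]; exists (agree s x); split => //; first exact: agree_open.
move=> u hu; apply: hs => i hi; by rewrite !linZ // hu.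
Qed.

Lemma wopen_haus (x y : M) : x <> y ->
  exists U V, [/\ wopen U, wopen V, U x, V y & forall z, U z -> V z -> False].
Proof.
move=> nxy.
have [i hi] : exists i, f i x <> f i y.
  apply: not_all_ex_not => h; apply: nxy; exact: fsep.
exists (agree [:: i] x), (agree [:: i] y); split => //; try exact: agree_open.
move=> z h1 h2; apply: hi.
by rewrite -(h1 i (or_introl erefl)) (h2 i (or_introl erefl)).
Qed.

Definition wtop : topmod K :=
  @TopMod K M wopen wopen_T wopen_I wopen_U wopen_add wopen_opp wopen_scale wopen_haus.

End WTop.


Definition cf_pull (M N : topmod K) (h : M -> N) (hl : lin h)
  (hc : forall V, tm_open V -> tm_open (fun x => V (h x))) (g : cfun N) : cfun M :=
  exist _ (fun x => sval g (h x))
    (conj (lin_comp (proj1 (proj2_sig g)) hl) (fun S => hc _ (proj2 (proj2_sig g) S))).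

Definition weakish M := forall W, tm_open W -> forall x, W x ->
  exists fs : list (cfun M), forall y, (forall f, In f fs -> sval f y = sval f x) -> W y.

Lemma weakish_pull (M N : topmod K) (h : M -> N) (hl : lin h)
  (hc : forall V, tm_open V -> tm_open (fun x => V (h x))) (U : N -> Prop) x :
  weakish N -> tm_open U -> U (h x) ->
  exists fs : list (cfun M), forall y, (forall f, In f fs -> sval f y = sval f x) -> U (h y).
Proof.
move=> wN oU Ux; have [fs hfs] := wN U oU _ Ux.
exists (map (cf_pull hl hc) fs) => y hy; apply: hfs => g hg.
exact: (hy (cf_pull hl hc g) (in_map _ _ _ hg)).
Qed.

Lemma coord_lin (M : lmodType K) n (j : M -> 'rV[K]_n) (hj : lin j) (i : 'I_n) :
  lin (fun m => (j m 0 i : K^o)).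
Proof. by move=> a u v; rewrite hj !mxE. Qed.

Lemma inV_weakish M : inV M -> weakish M.
Proof.
elim => {M}.
- move=> M n j hj ij allo W _ x Wx.
  pose co (i : 'I_n) : cfun M := exist _ (fun m => (j m 0 i : K^o))
     (conj (coord_lin hj i) (fun S => allo _)).
  exists (map co (enum 'I_n)) => y hy.
  suff e : y = x by rewrite e.
  apply: ij; apply/matrixP => i k; rewrite [i]ord1.
  exact: (hy (co k) (in_map _ _ _ (mem_In (mem_enum _ k)))).
- move=> M I N p _ IH pl _ _ hiff W oW x Wx.
  have pc : forall i V, tm_open V -> tm_open (fun x => V (p i x)).
    move=> i V oV; apply/hiff => z Vz.
    exists [:: i], (fun i' y => forall e : i' = i, V (eq_rect i' N y i e)).
    split.
    + move=> i' [<-|[]]; split.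
      * apply: open_ext oV => y; split; last by move/(_ erefl).
        by move=> Vy e; rewrite (proof_irrelevance _ e erefl).
      * by move=> e; rewrite (proof_irrelevance _ e erefl).
    + by move=> y /(_ i (or_introl erefl)) /(_ erefl).
  have [s [U [hU hW]]] := proj1 (hiff W) oW x Wx.
  have [fs hfs] := @collect (cfun M) I s (fun fs i => forall y,
      (forall f, In f fs -> sval f y = sval f x) -> U i (p i y))
      (fun fs gs j hsub h y hy => h y (fun f hf => hy f (hsub f hf)))
      (fun i hi => @weakish_pull M (N i) (p i) (pl i) (pc i) (U i) x (IH i)
                     (proj1 (hU i hi)) (proj2 (hU i hi))).
  by exists fs => y hy; apply: hW => i hi; apply: hfs.
- move=> M N j _ IH jl _ hiff W oW x Wx.
  have jc : forall V, tm_open V -> tm_open (fun x => V (j x)).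
    by move=> V oV; apply/hiff; exists V.
  have [U [oU hU]] := proj1 (hiff W) oW.
  have [fs hfs] := @weakish_pull M N j jl jc U x IH oU (proj1 (hU x) Wx).
  by exists fs => y /hfs /hU.
Qed.

Lemma weakish_weak M : weakish M -> weak_top M.
Proof.
move=> wM W; split.
- move=> oW x Wx; have [fs hfs] := wM W oW x Wx.
  exists fs, (fun f k => k = sval f x); split => // y hy; apply: hfs => f hf; exact: hy.
- move=> hW; apply: open_local => x Wx.
  have [s [U [hU hs]]] := hW x Wx.
  exists (fun y => forall f, In f s -> U f (sval f y)); split; last split.
  + apply: open_list => f _; exact: (proj2 (proj2_sig f) (U f)).
  + by move=> f /hU [].
  + exact: hs.
Qed.

Lemma weakish_strong M : inV M -> strong_top M.
Proof.
move=> _ N h hl [hinv hK1 hK2] iN hfun W oW.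
have wN := inV_weakish iN.
apply: open_local => m [n [Wn <-]].
have [fs hfs] := wN W oW n Wn.
have hinvl : lin hinv.
  move=> a u v; apply: (can_inj hK1); rewrite hl !hK2 //.
have gc : forall g : cfun N, dcont (M := M) (fun m => sval g (hinv m)).
  move=> g; apply/(hfun (fun m => sval g (hinv m))).
  - exact: lin_comp (proj1 (proj2_sig g)) hinvl.
  - have -> : (fun n => sval g (hinv (h n))) = sval g.
      by apply: functional_extensionality => z; rewrite hK1.
    exact: (proj2 (proj2_sig g)).
exists (fun m' => forall g, In g fs -> sval g (hinv m') = sval g n); split; last split.
- apply: open_list => g _; exact: dcont_eq (gc g).
- by move=> g _; rewrite hK1.
- move=> m' hm'; exists (hinv m'); split; last exact: hK2.
  exact: hfs.
Qed.

Lemma Kd_add (x y : K^o) (W : K^o -> Prop) : True -> W (x + y) ->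
  exists U V, [/\ True, True, U x, V y & forall u v, U u -> V v -> W (u + v)].
Proof. by move=> _ h; exists (fun u => u = x), (fun v => v = y); split => // u v -> ->. Qed.
Lemma Kd_opp (x : K^o) (W : K^o -> Prop) : True -> W (- x) ->
  exists U, [/\ True, U x & forall u, U u -> W (- u)].
Proof. by move=> _ h; exists (fun u => u = x); split => // u ->. Qed.
Lemma Kd_scale (a : K) (x : K^o) (W : K^o -> Prop) : True -> W (a *: x) ->
  exists U, [/\ True, U x & forall u, U u -> W (a *: u)].
Proof. by move=> _ h; exists (fun u => u = x); split => // u ->. Qed.
Lemma Kd_haus (x y : K^o) : x <> y ->
  exists U V, [/\ True, True, U x, V y & forall z, U z -> V z -> False].
Proof. by move=> h; exists (fun u => u = x), (fun v => v = y); split => // z -> e. Qed.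

Definition Kd : topmod K :=
  @TopMod K K^o (fun _ => True) I (fun _ _ _ _ => I) (fun _ _ => I)
    Kd_add Kd_opp Kd_scale Kd_haus.

Lemma Kd_inV : inV Kd.
Proof.
apply: (@inV_S K Kd 1 (fun k : K^o => const_mx k)) => //.
- by move=> a u v; apply/matrixP => i j; rewrite !mxE.
- by move=> x y /matrixP /(_ 0 0); rewrite !mxE.
Qed.

Section Prod.
Variable I : Type.
Lemma ev_lin (i : I) : lin (fun phi : I -> K^o => (phi i : K^o)).
Proof. by []. Qed.
Lemma ev_sep (a b : I -> K^o) : (forall i, a i = b i) -> a = b.
Proof. exact: functional_extensionality. Qed.
Definition Ptop : topmod K := wtop ev_lin ev_sep.

Lemma Ptop_inV : inV Ptop.
Proof.
apply: (@inV_prod K Ptop I (fun _ => Kd) (fun i phi => phi i)).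
- by move=> _; exact: Kd_inV.
- exact: ev_lin.
- exact: ev_sep.
- by move=> y; exists y.
- move=> W; split.
  + move=> hW x Wx; have [s hs] := hW x Wx.
    exists s, (fun i k => k = x i); split => // y hy; apply: hs => i hi; exact: hy.
  + move=> hW x Wx; have [s [U [hU hs]]] := hW x Wx.
    exists s => y hy; apply: hs => i hi.
    by rewrite /= (hy i hi); exact: (proj2 (hU i hi)).
Qed.
End Prod.

Definition Wk (A : chu_ob K) : topmod K :=
  @wtop (cA A) (cX A) (fun x a => (cp a x : K^o)) (fun x => cp_linl x)
     (fun a b h => cp_injA h).

Lemma Wk_inV A : inV (Wk A).
Proof.
apply: (@inV_sub K (Wk A) (Ptop (cX A)) (fun a x => (cp a x : K^o))).
- exact: Ptop_inV.
- move=> c a b; apply: functional_extensionality => x /=.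
  exact: (cp_linl x c a b).
- move=> a b e; apply: cp_injA => x; exact: (equal_f e x).
- move=> W; split.
  + move=> hW.
    exists (fun phi : cX A -> K^o => exists a, W a /\ exists s : list (cX A),
       (forall b, agree (fun x a => (cp a x : K^o)) s a b -> W b) /\
       forall x, In x s -> phi x = cp a x); split.
    * move=> phi [a [Wa [s [hs hphi]]]]; exists s => psi hpsi.
      exists a; split => //; exists s; split => // x hx.
      by rewrite (hpsi x hx) hphi.
    * move=> x; split.
      - move=> Wx; have [s hs] := hW x Wx.
        by exists x; split => //; exists s; split.
      - move=> [a [Wa [s [hs hphi]]]]; apply: hs => i hi; exact: hphi.
  + move=> [U [oU hU]] a Wa.
    have [s hs] := oU _ (proj1 (hU a) Wa).
    exists s => b hb; apply/hU; apply: hs => i hi; exact: hb.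
Qed.


Record closedP (V : lmodType K) (P : V -> Prop) := ClosedP {
  cl0 : P 0;
  clD : forall x y, P x -> P y -> P (x + y);
  clN : forall x, P x -> P (- x);
  clZ : forall a x, P x -> P (a *: x) }.

Definition subL (V : lmodType K) (P : V -> Prop) (c : closedP P) := {x : V | P x}.

Section SubL.
Variables (V : lmodType K) (P : V -> Prop) (c : closedP P).
HB.instance Definition _ := gen_eqMixin (subL c).
HB.instance Definition _ := gen_choiceMixin (subL c).
Definition sl_zero : subL c := exist _ 0 (cl0 c).
Definition sl_add (x y : subL c) : subL c :=
  exist _ (sval x + sval y) (clD c (proj2_sig x) (proj2_sig y)).
Definition sl_opp (x : subL c) : subL c := exist _ (- sval x) (clN c (proj2_sig x)).
Definition sl_scale (a : K) (x : subL c) : subL c :=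
  exist _ (a *: sval x) (clZ c a (proj2_sig x)).
Lemma sl_addA : associative sl_add.
Proof. by move=> x y z; apply: sig_eq; rewrite /= addrA. Qed.
Lemma sl_addC : commutative sl_add.
Proof. by move=> x y; apply: sig_eq; rewrite /= addrC. Qed.
Lemma sl_add0 : left_id sl_zero sl_add.
Proof. by move=> x; apply: sig_eq; rewrite /= add0r. Qed.
Lemma sl_addN : left_inverse sl_zero sl_opp sl_add.
Proof. by move=> x; apply: sig_eq; rewrite /= addNr. Qed.
HB.instance Definition _ := GRing.isZmodule.Build (subL c) sl_addA sl_addC sl_add0 sl_addN.
Lemma sl_scaleA a b (v : subL c) : sl_scale a (sl_scale b v) = sl_scale (a * b) v.
Proof. by apply: sig_eq; rewrite /= scalerA. Qed.
Lemma sl_scale1 : left_id 1 sl_scale.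
Proof. by move=> x; apply: sig_eq; rewrite /= scale1r. Qed.
Lemma sl_scaleDr : right_distributive sl_scale +%R.
Proof. by move=> a x y; apply: sig_eq; rewrite /= scalerDr. Qed.
Lemma sl_scaleDl (v : subL c) : {morph sl_scale^~ v: a b / a + b}.
Proof. by move=> a b; apply: sig_eq; rewrite /= scalerDl. Qed.
HB.instance Definition _ := GRing.Zmodule_isLmodule.Build K (subL c)
  sl_scaleA sl_scale1 sl_scaleDr sl_scaleDl.
End SubL.



Section CF.
Variable M : topmod K.
Definition cfP (f : M -> K^o) := lin f /\ dcont (M := M) f.

Lemma cf_closed : closedP cfP.
Proof.
split.
- split; first by move=> a x y; rewrite /= scaler0 addr0.
  apply: (@dcont_local M) => x.
  exists (fun _ => True); split; first exact: tm_open_T.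
  split; first exact: I.
  move=> y _; reflexivity.
- move=> f g [lf cf] [lg cg].
  have e : forall z, (f + g) z = f z + g z by [].
  split.
  + move=> a x y; rewrite !e (lf a x y) (lg a x y) scalerDr addrACA; reflexivity.
  + apply: dcont_local => x.
    exists (fun y => f y = f x /\ g y = g x); split; last first.
      split; first by split.
      by move=> y [h1 h2]; rewrite !e h1 h2.
    exact: tm_open_I (dcont_eq _ cf) (dcont_eq _ cg).
- move=> f [lf cf].
  have e : forall z, (- f) z = - f z by [].
  split.
  + move=> a x y; rewrite !e (lf a x y) opprD scalerN; reflexivity.
  + apply: dcont_local => x; exists (fun y => f y = f x); split; last first.
      split => //; by move=> y h; rewrite !e h.
    exact: dcont_eq.
- move=> a f [lf cf].
  have e : forall z, (a *: f) z = a *: f z by [].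
  split.
  + move=> b x y; rewrite !e (lf b x y) scalerDr !scalerA mulrC; reflexivity.
  + apply: dcont_local => x; exists (fun y => f y = f x); split; last first.
      split => //; by move=> y h; rewrite !e h.
    exact: dcont_eq.
Qed.

Definition cfT : lmodType K := subL cf_closed.

Lemma cf_linl (x : cfT) : lin (fun a : M => (sval x a : K^o)).
Proof. exact: (proj1 (proj2_sig x)). Qed.
Lemma cf_linr (a : M) : lin (fun x : cfT => (sval x a : K^o)).
Proof. by []. Qed.
Lemma cf_injX (x x' : cfT) : (forall a, sval x a = sval x' a) -> x = x'.
Proof. by move=> h; apply: sig_eq; apply: functional_extensionality. Qed.

Hypothesis wM : weakish M.
Lemma cf_injA (a a' : M) : (forall x : cfT, sval x a = sval x a') -> a = a'.
Proof.
move=> h; apply: NNPP => ne.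
have [U [V [oU oV Ua Va dis]]] := tm_hausdorff ne.
have [fs hfs] := wM oU Ua.
apply: (dis a'); last exact: Va.
apply: hfs => f _; symmetry; exact: (h f).
Qed.

Definition Dl : chu_ob K :=
  @ChuOb K M cfT (fun a (x : cfT) => sval x a) cf_linl cf_linr cf_injA cf_injX.
End CF.


Section Repr.
Hypothesis si : self_injective K.
Variable A : chu_ob K.

Lemma cpl0 x : cp (0 : cA A) x = 0.
Proof. exact: (lin0 (cp_linl x)). Qed.

Lemma repr (phi : cfun (Wk A)) : exists x, forall a, cp a x = sval phi a.
Proof.
case: phi => [ph [lph cph]] /=.
have ph0 : ph 0 = 0 := lin0 lph.
have [s hs] : exists s : list (cX A),
    forall b, (forall x, In x s -> cp b x = 0) -> ph b = 0.
  have := cph (fun k => k = 0) 0 ph0; case=> s hs; exists s => b hb; apply: hs => x hx.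
  by rewrite /= hb // cpl0.
pose n := size s.
pose io (a : cA A) : 'rV[K]_n := \row_(k < n) cp a (seq.nth 0 s k).
have iol : lin io by move=> c a b; apply/matrixP => i k; rewrite !mxE (cp_linl _ c a b).
have key : forall a b, io a = io b -> ph a = ph b.
  move=> a b e; apply/eqP; rewrite -subr_eq0 -(linB lph); apply/eqP; apply: hs => x hx.
  have hx' := In_mem hx.
  have hi : (index x s < n)%N by rewrite index_mem.
  move/matrixP: e => /(_ 0 (Ordinal hi)); rewrite !mxE /= seq.nth_index // => e.
  by rewrite (linB (cp_linl x)) e subrr.
pose P (v : 'rV[K]_n) := exists a, v = io a.
have cl : closedP P.
  split.
  - by exists 0; rewrite (lin0 iol).
  - by move=> _ _ [a ->] [b ->]; exists (a + b); rewrite (linD iol).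
  - by move=> _ [a ->]; exists (- a); rewrite (linN iol).
  - by move=> c _ [a ->]; exists (c *: a); rewrite (linZ iol).
pose Img := subL cl.
pose pick (v : Img) := proj1_sig (cid (proj2_sig v)).
have pickP : forall v : Img, sval v = io (pick v).
  by move=> v; rewrite /pick; case: cid.
pose ph' (v : Img) : K^o := ph (pick v).
have ph'l : lin ph'.
  move=> c v w; rewrite /ph' -(lph c).
  apply: key; rewrite iol -!pickP; reflexivity.
pose i (v : Img) : 'rV[K]_n := sval v.
have il : lin i by [].
have ii : injective i by move=> v w e; apply: sig_eq.
have [g [gl hg]] := si il ii ph'l.
exists (\sum_(k < n) g (delta_mx 0 k) *: seq.nth 0 s k) => a.
rewrite (big_morph (fun x => (cp a x : K^o)) (linD (cp_linr a)) (lin0 (cp_linr a))).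
have -> : ph a = ph' (exist _ (io a) (ex_intro _ a erefl) : Img).
  by rewrite /ph'; apply: key; rewrite -pickP.
rewrite -hg /i /= (row_sum_delta (io a)).
rewrite (big_morph g (linD gl) (lin0 gl)).
apply: eq_bigr => k _; rewrite (linZ (cp_linr a)) (linZ gl) mxE.
exact: mulrC.
Qed.
End Repr.


Section Equiv.
Hypothesis si : self_injective K.
Variable Q : topmod K -> Prop.
Hypothesis HQ : forall M, inV M -> Q M.

Definition Vq_ob := { M : topmod K | inV M /\ Q M }.
Definition Vq_cat : category :=
  @Category Vq_ob (fun (M N : Vq_ob) => top_hom (proj1_sig M) (proj1_sig N))
    (fun (M : Vq_ob) => top_id _) (fun _ _ _ g f => top_comp g f).

Definition WkO (A : chu_ob K) : Vq_ob := exist _ (Wk A) (conj (Wk_inV A) (HQ (Wk_inV A))).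

Lemma Wk_lin (A B : chu_ob K) (h : chu_hom A B) : lin (sval h).1.
Proof. by case: h => [[f g] [lf lg adj]]. Qed.

Lemma Wk_cont (A B : chu_ob K) (h : chu_hom A B) : cont (M := Wk A) (N := Wk B) (sval h).1.
Proof.
case: h => [[f g] [lf lg adj]] /= W hW a Wa.
have [s hs] := hW _ Wa.
exists (map g s) => b hb; apply: hs => y hy.
rewrite /= !adj; exact: hb (g y) (in_map _ _ _ hy).
Qed.

Definition Wk_map (A B : chu_ob K) (h : chu_hom A B) : top_hom (Wk A) (Wk B) :=
  exist _ (sval h).1 (conj (@Wk_lin A B h) (@Wk_cont A B h)).

Definition WkF : functor (chu_cat K) Vq_cat.
Proof.
refine (@Functor (chu_cat K) Vq_cat WkO (fun A B h => Wk_map h) _ _).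
- by move=> A; apply: sig_eq.
- move=> A B C [[g1 g2] [? ? ?]] [[f1 f2] [? ? ?]]; by apply: sig_eq.
Defined.

Definition DlO (Mo : Vq_ob) : chu_ob K := Dl (inV_weakish (proj1 (proj2_sig Mo))).

Section DlMap.
Variables (M N : Vq_ob) (h : top_hom (proj1_sig M) (proj1_sig N)).
Definition dl2 (g : cX (DlO N)) : cX (DlO M) :=
  cf_pull (proj1 (proj2_sig h)) (proj2 (proj2_sig h)) g.
Lemma dl2_lin : lin dl2.
Proof. by move=> a g g'; apply: sig_eq. Qed.
Definition Dl_map : chu_hom (DlO M) (DlO N) :=
  exist _ (sval h, dl2) (And3 (proj1 (proj2_sig h)) dl2_lin (fun a y => erefl)).
End DlMap.

Definition DlF : functor Vq_cat (chu_cat K).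
Proof.
refine (@Functor Vq_cat (chu_cat K) DlO (fun A B h => Dl_map h) _ _).
- move=> A; apply: sig_eq => /=; congr pair.
  by apply: functional_extensionality => g; apply: sig_eq.
- move=> A B C [g [lg cg]] [f [lf cf]]; apply: sig_eq => /=; congr pair.
  by apply: functional_extensionality => z; apply: sig_eq.
Defined.

Section Eta.
Variable A : chu_ob K.
Definition psi (phi : cfT (Wk A)) : cX A := proj1_sig (cid (repr si phi)).
Lemma psiP phi a : cp a (psi phi) = sval phi a.
Proof. by rewrite /psi; case: cid => x /= ->. Qed.
Lemma psi_lin : lin psi.
Proof.
move=> c u v; apply: cp_injX => a.
rewrite psiP (cp_linr a c (psi u) (psi v)) !psiP; reflexivity.
Qed.
Lemma dcont_chi (x : cX A) : dcont (M := Wk A) (fun a => cp a x).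
Proof.
apply: dcont_local => a; exists (agree (fun x a => (cp a x : K^o)) [:: x] a).
split; first exact: agree_open.
split; first by move=> i [<-|[]].
by move=> y /(_ x (or_introl erefl)).
Qed.
Definition chi (x : cX A) : cfT (Wk A) :=
  exist _ (fun a => cp a x) (conj (cp_linl x) (@dcont_chi x)).
Lemma chi_lin : lin chi.
Proof.
move=> c u v; apply: sig_eq; apply: functional_extensionality => a /=.
exact: (cp_linr a c u v).
Qed.
Definition eta : chu_hom A (DlO (WkO A)) :=
  exist _ (fun a => a, psi) (And3 (lin_id (M := cA A)) psi_lin (fun a y => esym (psiP y a))).
Definition eta_inv : chu_hom (DlO (WkO A)) A :=
  exist _ (fun a => a, chi) (And3 (lin_id (M := cA A)) chi_lin (fun a y => erefl)).
Lemma eta_iso : is_iso (C := chu_cat K) eta.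
Proof.
exists eta_inv; split.
- apply: sig_eq => /=; congr pair; apply: functional_extensionality => x.
  by apply: cp_injX => a; rewrite psiP.
- apply: sig_eq => /=; congr pair; apply: functional_extensionality => phi.
  by apply: sig_eq; apply: functional_extensionality => a /=; rewrite psiP.
Qed.
End Eta.

Lemma eta_nat (a a' : chu_ob K) (f : chu_hom a a') :
  @Defs.comp (chu_cat K) _ _ _ (eta a') f = Defs.comp (fmap DlF (fmap WkF f)) (eta a).
Proof.
case: f => [[f1 f2] [l1 l2 adj]]; apply: sig_eq => /=; congr pair.
apply: functional_extensionality => z; apply: cp_injX => b.
by move: adj => /= adj; rewrite -adj !psiP.
Qed.

Section Eps.
Variable Mo : Vq_ob.
Let M := proj1_sig Mo.
Lemma eps_cont : cont (M := Wk (DlO Mo)) (N := M) (fun x => x).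
Proof.
move=> W oW a Wa; have [fs h] := inV_weakish (proj1 (proj2_sig Mo)) oW Wa.
by exists fs => b hb; exact: h b hb.
Qed.
Lemma eps_inv_cont : cont (M := M) (N := Wk (DlO Mo)) (fun x => x).
Proof.
move=> W oW; apply: open_local => a Wa; have [s hs] := oW a Wa.
exists (fun y => forall i : cfT M, In i s -> sval i y = sval i a); split; last split.
- apply: open_list => i _; exact: dcont_eq (proj2 (proj2_sig i)).
- by [].
- exact: hs.
Qed.
Definition eps : Defs.hom Vq_cat (fob WkF (fob DlF Mo)) Mo :=
  exist _ (fun x => x) (conj (lin_id (M := M)) eps_cont).
Definition eps_inv : Defs.hom Vq_cat Mo (fob WkF (fob DlF Mo)) :=
  exist _ (fun x => x) (conj (lin_id (M := M)) eps_inv_cont).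
Lemma eps_iso : is_iso eps.
Proof. by exists eps_inv; split; apply: sig_eq. Qed.
End Eps.

Lemma eps_nat (b b' : Vq_ob) (g : Defs.hom Vq_cat b b') :
  @Defs.comp Vq_cat _ _ _ g (eps b) = Defs.comp (eps b') (fmap WkF (fmap DlF g)).
Proof. by case: g => [g [lg cg]]; apply: sig_eq. Qed.

Lemma equiv_q : cat_equiv (chu_cat K) Vq_cat.
Proof.
exists WkF, DlF, eta, eps; split; [exact: eta_nat|split; [exact: eta_iso|split]].
- exact: eps_nat.
- exact: eps_iso.
Qed.
End Equiv.

End Gen.

Theorem mainTheorem13 (K : comPzRingType) :
  self_injective K -> cogenerator K ->
  cat_equiv (chu_cat K) (Vs_cat K) /\ cat_equiv (chu_cat K) (Vw_cat K).
Proof.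
move=> si _; split.
- exact: (@equiv_q K si (@strong_top K) (@weakish_strong K)).
- exact: (@equiv_q K si (@weak_top K) (fun M h => weakish_weak (inV_weakish h))).
Qed.
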